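(* Let $R\in[0,\tfrac34]$ and let $S_1\subseteq S$ be the set of offline vertices covered by the advice $A$. Run the algorithm described in the context with $$f_j(x)=f_{\mathsf U}(x):=\min\Bigl\{\frac{1-R}{1-x},1\Bigr\}\ \ (j\in S\setminus S_1),\qquad f_j(x)=f_{\mathsf L}(x):=\max\Bigl\{1-\frac{1-R}{x},0\Bigr\}\ \ (j\in S_1).$$ Then for every instance $G$ and advice $A$, $$\mathsf{ALG}(G,A)\ \ge\ \bigl(2\sqrt{1-R}-(1-R)\bigr)\cdot\mathsf{ADVICE}(G,A),$$ i.e. the algorithm is $C$-consistent with $C=2\sqrt{1-R}-(1-R)$, equivalently $\sqrt{1-R}+\sqrt{1-C}=1$.
   Context: Setting (two-stage vertex-weighted bipartite matching with advice). A bipartite graph $G=(D,S,E)$ has offline vertices $S$, each $j\in S$ carrying a weight $w_j\ge 0$, and online vertices $D=D_1\sqcup D_2$ arriving in two stages. $E_1$ (resp. $E_2$) denotes the set of edges between $D_1$ (resp. $D_2$) and $S$. The advice is a matching $A\subseteq E_1$; $S_1\subseteq S$ denotes the set of offline vertices covered by $A$. $\mathsf{ADVICE}(G,A)=\sum_{j\in S_1}w_j+\max\{\sum_{j\text{ covered by }M}w_j: M\subseteq E_2\text{ a matching covering no vertex of }S_1\}$ (the value of following the advice exactly in the first stage and then matching optimally). Algorithm (parameters: functions $f_j:[0,1]\to[0,1]$, $j\in S$). First stage: after $D_1,E_1,A$ are revealed, let $\bar x$ be an optimal solution of (P1): maximize $\sum_{j\in S} w_j\bigl(x_j-\int_0^{x_j}f_j(t)\,dt\bigr)$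 subject to $x_i:=\sum_{j:(i,j)\in E_1}x_{ij}\le 1$ ($i\in D_1$), $x_j:=\sum_{i:(i,j)\in E_1}x_{ij}\le 1$ ($j\in S$), $x_{ij}\ge0$. Second stage: after $D_2,E_2$ are revealed, let $\bar y$ be an optimal solution of (P2): maximize $\sum_{j\in S}w_jy_j$ subject to $y_i:=\sum_{j:(i,j)\in E_2}y_{ij}\le 1$ ($i\in D_2$), $y_j:=\sum_{i:(i,j)\in E_2}y_{ij}\le 1-\bar x_j$ ($j\in S$), $y_{ij}\ge 0$. The algorithm's value is $\mathsf{ALG}(G,A)=\sum_{j\in S}w_j(\bar x_j+\bar y_j)$. *)

(* Defs.v *)
From HB Require Import structures.
From mathcomp Require Import all_boot all_order all_algebra.
From mathcomp Require Import all_classical all_reals all_analysis.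
Set Implicit Arguments. Unset Strict Implicit. Unset Printing Implicit Defensive.
Import Order.TTheory GRing.Theory Num.Theory.
Local Open Scope ring_scope.
Local Open Scope classical_set_scope.

Section TwoStage.
Context {R : realType} {D1 D2 S : finType}.

Definition is_matching {I : finType} (E M : {set I * S}) : bool :=
  (M \subset E) &&
  [forall e in M, forall e' in M,
     (e != e') ==> ((e.1 != e'.1) && (e.2 != e'.2))].

Definition covered {I : finType} (M : {set I * S}) : {set S} :=
  [set j | [exists i, (i, j) \in M]].

Definition mweight (w : S -> R) (T : {set S}) : R := \sum_(j in T) w j.

Definition ADVICE (w : S -> R) (E2 : {set D2 * S}) (A : {set D1 * S}) : R :=
  mweight w (covered A) +
  \big[Num.max/0]_(M : {set D2 * S} |
                     is_matching E2 M && [disjoint covered M & covered A])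
     mweight w (covered M).

Definition frac_feasible {I : finType} (E : {set I * S}) (cap : S -> R)
  (x : I -> S -> R) : Prop :=
  [/\ (forall i j, 0 <= x i j),
      (forall i j, (i, j) \notin E -> x i j = 0),
      (forall i, \sum_(j : S) x i j <= 1) &
      (forall j, \sum_(i : I) x i j <= cap j)].

Definition load {I : finType} (x : I -> S -> R) (j : S) : R :=
  \sum_(i : I) x i j.

Definition P1_obj (w : S -> R) (f : S -> R -> R) (x : D1 -> S -> R) : R :=
  \sum_(j : S) w j * (load x j -
     \int[lebesgue_measure]_(t in `[0, load x j]) f j t).

Definition P1_optimal (w : S -> R) (f : S -> R -> R) (E1 : {set D1 * S})
  (x : D1 -> S -> R) : Prop :=
  frac_feasible E1 (fun _ => 1) x /\
  forall x', frac_feasible E1 (fun _ => 1) x' -> P1_obj w f x' <= P1_obj w f x.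

Definition P2_obj (w : S -> R) (y : D2 -> S -> R) : R :=
  \sum_(j : S) w j * load y j.

Definition P2_optimal (w : S -> R) (E2 : {set D2 * S}) (xbar : D1 -> S -> R)
  (y : D2 -> S -> R) : Prop :=
  frac_feasible E2 (fun j => 1 - load xbar j) y /\
  forall y', frac_feasible E2 (fun j => 1 - load xbar j) y' ->
    P2_obj w y' <= P2_obj w y.

Definition ALG (w : S -> R) (x : D1 -> S -> R) (y : D2 -> S -> R) : R :=
  \sum_(j : S) w j * (load x j + load y j).

End TwoStage.

Definition fU {R : realType} (Rp : R) (x : R) : R :=
  Num.min ((1 - Rp) / (1 - x)) 1.
Definition fL {R : realType} (Rp : R) (x : R) : R :=
  Num.max (1 - (1 - Rp) / x) 0.

(* Main.v *)
Require Import Defs.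
From HB Require Import structures.
From mathcomp Require Import all_boot all_order all_algebra.
From mathcomp Require Import all_classical all_reals all_analysis.
From mathcomp Require Import ring lra.
Import Order.TTheory GRing.Theory Num.Theory.
Local Open Scope ring_scope.
Local Open Scope classical_set_scope.

Section S.
Context {R : realType}.
Notation mu := (@lebesgue_measure R).

Lemma nd_bounded (g : R -> R) (D : set R) : nondecreasing_fun g ->
  (forall x, D x -> 0 <= x <= 1) -> [bounded g x | x in D].
Proof.
move=> gnd HD; rewrite /bounded_near.
near=> M => x /HD /andP[x0 x1] /=.
have h0 := gnd _ _ x0; have h1 := gnd _ _ x1.
rewrite ler_norml; apply/andP; split.
  apply: le_trans h0. rewrite lerNl. apply: le_trans (ler_norm _) _. rewrite normrN.
  near: M. apply: nbhs_pinfty_ge. exact: num_real.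
apply: (le_trans h1). apply: le_trans (ler_norm _) _.
near: M. apply: nbhs_pinfty_ge. exact: num_real.
Unshelve. all: end_near.
Qed.

Lemma mu_itv_fin s t (u v : R) : (mu [set` Interval (BSide s u) (BSide t v)] < +oo)%E.
Proof.
have := lebesgue_measure_itv (Interval (BSide s u) (BSide t v)).
move=> ->. case: ifP => //= _. by rewrite -EFinD ltry.
Qed.

Lemma nd_integrable (g : R -> R) s t (u v : R) : nondecreasing_fun g ->
  (forall x, x \in Interval (BSide s u) (BSide t v) -> 0 <= x <= 1) ->
  mu.-integrable [set` Interval (BSide s u) (BSide t v)] (EFin \o g).
Proof.
move=> gnd HD.
apply: measurable_bounded_integrable.
- exact: measurable_itv.
- exact: mu_itv_fin.
- exact: measurable_realfun.nondecreasing_measurable.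
- apply: nd_bounded => // x; exact: HD.
Qed.

Lemma mu_itv_len s t (u v : R) : u <= v -> fine (mu [set` Interval (BSide s u) (BSide t v)]) = v - u.
Proof.
move=> uv.
have := lebesgue_measure_itv (Interval (BSide s u) (BSide t v)).
move=> ->. case: ifP => /= h; first by [].
move: h; rewrite lte_fin; rewrite le_eqVlt in uv.
by case/orP: uv => [/eqP->|->//]; rewrite subrr.
Qed.


Lemma nd_int_diff (g : R -> R) (u v : R) : nondecreasing_fun g ->
  0 <= u -> u <= v -> v <= 1 ->
  \int[mu]_(t in `[0, v]) g t - \int[mu]_(t in `[0, u]) g t
   = \int[mu]_(t in `]u, v]) g t.
Proof.
move=> gnd u0 uv v1.
apply: Rintegral_itvB; rewrite ?bnd_simp //.
apply: nd_integrable => // x; rewrite in_itv /= => /andP[x0 xv].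
by rewrite x0 (le_trans xv).
Qed.

Lemma nd_int_bounds (g : R -> R) (u v : R) : nondecreasing_fun g ->
  0 <= u -> u <= v -> v <= 1 ->
  (v - u) * g u <= \int[mu]_(t in `[0, v]) g t - \int[mu]_(t in `[0, u]) g t
   <= (v - u) * g v.
Proof.
move=> gnd u0 uv v1; rewrite nd_int_diff //.
have ig : mu.-integrable `]u, v] (EFin \o g).
  apply: nd_integrable => // x; rewrite in_itv /= => /andP[x0 xv].
  by rewrite (le_trans u0 (ltW x0)) (le_trans xv).
have ic : forall c : R, mu.-integrable `]u, v] (EFin \o (fun _ : R => c)).
  move=> c; apply: nd_integrable => //; last first.
    move=> x; rewrite in_itv /= => /andP[x0 xv].
    by rewrite (le_trans u0 (ltW x0)) (le_trans xv).
apply/andP; split.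
- rewrite mulrC -(@mu_itv_len false false u v uv) -Rintegral_cst; last exact: measurable_itv.
  apply: le_Rintegral => //.
  move=> x /=; rewrite in_itv /= => /andP[x0 xv]; apply: gnd; exact: ltW.
- rewrite mulrC -(@mu_itv_len false false u v uv) -Rintegral_cst; last exact: measurable_itv.
  apply: le_Rintegral => //.
  move=> x /=; rewrite in_itv /= => /andP[x0 xv]; apply: gnd; exact: xv.
Qed.


Definition fLh (Rp x : R) : R := if x <= 1 - Rp then 0 else 1 - (1 - Rp) / x.
Definition fUh (Rp x : R) : R := if x <= Rp then (1 - Rp) / (1 - x) else 1.

Lemma fLh_nd Rp : 0 <= Rp <= 3/4 -> nondecreasing_fun (fLh Rp).
Proof.
move=> /andP[R0 R1] x y xy; rewrite /fLh.
case: ifP => hx; case: ifP => hy.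
- by [].
- have hy' : 1 - Rp < y by rewrite ltNge hy.
  rewrite subr_ge0 ler_pdivrMr; lra.
- have hx' : 1 - Rp < x by rewrite ltNge hx. lra.
- have hx' : 1 - Rp < x by rewrite ltNge hx.
  have hy' : 1 - Rp < y by rewrite ltNge hy.
  rewrite lerD2l lerN2 ler_pdivrMr; last lra.
  rewrite mulrAC ler_pdivlMr; last lra.
  nra.
Qed.

Lemma fUh_nd Rp : 0 <= Rp <= 3/4 -> nondecreasing_fun (fUh Rp).
Proof.
move=> /andP[R0 R1] x y xy; rewrite /fUh.
case: ifP => hx; case: ifP => hy.
- rewrite ler_pdivrMr; last lra.
  rewrite mulrAC ler_pdivlMr; last lra.
  nra.
- rewrite ler_pdivrMr; lra.
- have hx' : Rp < x by rewrite ltNge hx. lra.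
- by [].
Qed.

Lemma fL_eq Rp x : 0 <= Rp <= 3/4 -> 0 < x -> fL Rp x = fLh Rp x.
Proof.
move=> /andP[R0 R1] x0; rewrite /fL /fLh.
case: ifP => hx.
- apply: max_r. rewrite subr_le0 ler_pdivlMr; lra.
- have hx' : 1 - Rp < x by rewrite ltNge hx.
  apply: max_l. rewrite subr_ge0 ler_pdivrMr; lra.
Qed.

Lemma fU_eq Rp x : 0 <= Rp <= 3/4 -> x < 1 -> fU Rp x = fUh Rp x.
Proof.
move=> /andP[R0 R1] x1; rewrite /fU /fUh.
case: ifP => hx.
- apply: min_l. rewrite ler_pdivrMr; lra.
- have hx' : Rp < x by rewrite ltNge hx.
  apply: min_r. rewrite ler_pdivlMr; lra.
Qed.

Lemma int_fL Rp v : 0 <= Rp <= 3/4 -> 0 <= v <= 1 ->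
  \int[mu]_(t in `[0, v]) fL Rp t = \int[mu]_(t in `[0, v]) fLh Rp t.
Proof.
move=> HR /andP[v0 v1].
have ih : mu.-integrable `]0, v] (EFin \o fLh Rp).
  apply: nd_integrable; first exact: fLh_nd.
  move=> x; rewrite in_itv /= => /andP[x0 xv]; apply/andP; split; lra.
have eqf : {in `]0, v], fLh Rp =1 fL Rp}.
  move=> x; rewrite inE /= in_itv /= => /andP[x0 xv]; by rewrite fL_eq.
rewrite -!Rintegral_itv_obnd_cbnd //; last first.
  apply: (eq_integrable _ _ _ _ ih) => //.
  by move=> x xin /=; rewrite eqf.
by apply: eq_Rintegral => x xin; rewrite eqf.
Qed.

Lemma int_fU Rp v : 0 <= Rp <= 3/4 -> 0 <= v <= 1 ->
  \int[mu]_(t in `[0, v]) fU Rp t = \int[mu]_(t in `[0, v]) fUh Rp t.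
Proof.
move=> HR /andP[v0 v1].
have ih : mu.-integrable `[0, v[ (EFin \o fUh Rp).
  apply: nd_integrable; first exact: fUh_nd.
  move=> x; rewrite in_itv /= => /andP[x0 xv]; apply/andP; split; lra.
have eqf : {in `[0, v[, fUh Rp =1 fU Rp}.
  move=> x; rewrite inE /= in_itv /= => /andP[x0 xv]; rewrite fU_eq //; lra.
rewrite -!Rintegral_itv_bndo_bndc //; last first.
  apply: (eq_integrable _ _ _ _ ih) => //.
  by move=> x xin /=; rewrite eqf.
by apply: eq_Rintegral => x xin; rewrite eqf.
Qed.


Lemma Phi_gen (g : R -> R) (u v : R) : nondecreasing_fun g ->
  (forall a b, 0 <= a -> a <= b -> b <= 1 -> g b - g a <= 4 * (b - a)) ->
  0 <= u <= 1 -> 0 <= v <= 1 ->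
  (v - u) * (1 - g u) - 4 * (v - u) ^+ 2 <=
  (v - \int[mu]_(t in `[0, v]) g t) - (u - \int[mu]_(t in `[0, u]) g t).
Proof.
move=> gnd glip /andP[u0 u1] /andP[v0 v1].
case: (lerP u v) => uv.
- have /andP[_ h] := @nd_int_bounds g u v gnd u0 uv v1.
  have hl := glip _ _ u0 uv v1.
  have hg : 0 <= (v - u) * (4 * (v - u) - (g v - g u)).
    apply: mulr_ge0; lra.
  nra.
- have uv' := ltW uv.
  have /andP[h _] := @nd_int_bounds g v u gnd v0 uv' u1.
  have hl := glip _ _ v0 uv' u1.
  have hg : 0 <= (u - v) * (4 * (u - v) - (g u - g v)).
    apply: mulr_ge0; lra.
  nra.
Qed.

Lemma fLh_lip Rp a b : 0 <= Rp <= 3/4 -> 0 <= a -> a <= b -> b <= 1 ->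
  fLh Rp b - fLh Rp a <= 4 * (b - a).
Proof.
move=> /andP[R0 R1] a0 ab b1; rewrite /fLh.
case: ifP => hb; case: ifP => ha.
- lra.
- have ha' : 1 - Rp < a by rewrite ltNge ha. lra.
- have hb' : 1 - Rp < b by rewrite ltNge hb.
  have bq : (1 - Rp) / b * b = 1 - Rp by rewrite divfK //; apply: lt0r_neq0; lra.
  have q1 : (1 - Rp) / b <= 1 by rewrite ler_pdivrMr; lra.
  nra.
- have ha' : 1 - Rp < a by rewrite ltNge ha.
  have hb' : 1 - Rp < b by rewrite ltNge hb.
  have bq : (1 - Rp) / b * b = 1 - Rp by rewrite divfK //; apply: lt0r_neq0; lra.
  have ap : (1 - Rp) / a * a = 1 - Rp by rewrite divfK //; apply: lt0r_neq0; lra.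
  have q1 : (1 - Rp) / b <= 1 by rewrite ler_pdivrMr; lra.
  have p1 : (1 - Rp) / a <= 1 by rewrite ler_pdivrMr; lra.
  have q0 : 0 <= (1 - Rp) / b by apply: divr_ge0; lra.
  have p0 : 0 <= (1 - Rp) / a by apply: divr_ge0; lra.
  set p := (1 - Rp) / a in ap p1 p0 *; set q := (1 - Rp) / b in bq q1 q0 *.
  have e : (p - q) * (1 - Rp) = p * q * (b - a) by nra.
  have pq : p * q <= 1 by nra.
  have : (p - q) * (1 - Rp) <= b - a by nra.
  nra.
Qed.

Lemma fUh_lip Rp a b : 0 <= Rp <= 3/4 -> 0 <= a -> a <= b -> b <= 1 ->
  fUh Rp b - fUh Rp a <= 4 * (b - a).
Proof.
move=> /andP[R0 R1] a0 ab b1; rewrite /fUh.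
case: ifP => hb; case: ifP => ha.
- have bq : (1 - Rp) / (1 - b) * (1 - b) = 1 - Rp by rewrite divfK //; apply: lt0r_neq0; lra.
  have ap : (1 - Rp) / (1 - a) * (1 - a) = 1 - Rp by rewrite divfK //; apply: lt0r_neq0; lra.
  have q1 : (1 - Rp) / (1 - b) <= 1 by rewrite ler_pdivrMr; lra.
  have p1 : (1 - Rp) / (1 - a) <= 1 by rewrite ler_pdivrMr; lra.
  have q0 : 0 <= (1 - Rp) / (1 - b) by apply: divr_ge0; lra.
  have p0 : 0 <= (1 - Rp) / (1 - a) by apply: divr_ge0; lra.
  set p := (1 - Rp) / (1 - a) in ap p1 p0 *; set q := (1 - Rp) / (1 - b) in bq q1 q0 *.
  have e : (q - p) * (1 - Rp) = p * q * (b - a) by nra.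
  have pq : p * q <= 1 by nra.
  have : (q - p) * (1 - Rp) <= b - a by nra.
  nra.
- have ha' : Rp < a by rewrite ltNge ha. lra.
- have hb' : Rp < b by rewrite ltNge hb.
  have ap : (1 - Rp) / (1 - a) * (1 - a) = 1 - Rp by rewrite divfK //; apply: lt0r_neq0; lra.
  have p1 : (1 - Rp) / (1 - a) <= 1 by rewrite ler_pdivrMr; lra.
  nra.
- lra.
Qed.


Lemma sqrt_facts (Rp : R) : 0 <= Rp <= 3/4 ->
  let s := Num.sqrt (1 - Rp) in 0 <= s /\ s ^+ 2 = 1 - Rp /\ 1/2 <= s /\ s <= 1.
Proof.
move=> /andP[R0 R1] s.
have s0 : 0 <= s by apply: sqrtr_ge0.
have s2 : s ^+ 2 = 1 - Rp by rewrite sqr_sqrtr //; lra.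
split => //; split => //; split; nra.
Qed.

Lemma ptL (Rp x : R) : 0 <= Rp <= 3/4 -> 0 <= x <= 1 ->
  2 * Num.sqrt (1 - Rp) - (1 - Rp) <= (1 - fLh Rp x) + x * fLh Rp x.
Proof.
move=> HR /andP[x0 x1].
have [s0 [s2 [s12 s1]]] := @sqrt_facts Rp HR.
move: HR s0 s2 s12 s1 => /andP[R0 R1].
set s := Num.sqrt (1 - Rp) => s0 s2 s12 s1.
rewrite /fLh; case: ifP => hx.
- nra.
- have hx' : 1 - Rp < x by rewrite ltNge hx.
  have ap : (1 - Rp) / x * x = 1 - Rp by rewrite divfK //; apply: lt0r_neq0; lra.
  set p := (1 - Rp) / x in ap *.
  have : 0 <= (x - s) ^+ 2 by apply: sqr_ge0.
  nra.
Qed.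

Lemma ptU (Rp x : R) : 0 <= Rp <= 3/4 -> 0 <= x <= 1 ->
  2 * Num.sqrt (1 - Rp) - (1 - Rp) <= x * fUh Rp x + (1 - x).
Proof.
move=> HR /andP[x0 x1].
have [s0 [s2 [s12 s1]]] := @sqrt_facts Rp HR.
move: HR s0 s2 s12 s1 => /andP[R0 R1].
set s := Num.sqrt (1 - Rp) => s0 s2 s12 s1.
rewrite /fUh; case: ifP => hx.
- have ap : (1 - Rp) / (1 - x) * (1 - x) = 1 - Rp by rewrite divfK //; apply: lt0r_neq0; lra.
  set p := (1 - Rp) / (1 - x) in ap *.
  have : 0 <= ((1 - x) - s) ^+ 2 by apply: sqr_ge0.
  have p0 : 0 <= p by rewrite /p; apply: divr_ge0; lra.
  nra.
- nra.
Qed.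

End S.

Section Comb.
Context {R : realType}.

Lemma match_uniq1 {I S : finType} (E M : {set I * S}) i j j' :
  is_matching E M -> (i, j) \in M -> (i, j') \in M -> j = j'.
Proof.
move=> /andP[_ /forallP H] h1 h2.
move: (H (i, j)) => /implyP /(_ h1) /forallP /(_ (i, j')) /implyP /(_ h2).
case: (eqVneq (i, j) (i, j')) => [[]//| _ /=]; by rewrite eqxx.
Qed.

Lemma match_uniq2 {I S : finType} (E M : {set I * S}) i i' j :
  is_matching E M -> (i, j) \in M -> (i', j) \in M -> i = i'.
Proof.
move=> /andP[_ /forallP H] h1 h2.
move: (H (i, j)) => /implyP /(_ h1) /forallP /(_ (i', j)) /implyP /(_ h2).
case: (eqVneq (i, j) (i', j)) => [[]//| _ /=]; by rewrite eqxx andbF.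
Qed.

Lemma sum_uniq {T : finType} (P : pred T) (F : T -> R) :
  (forall x y, P x -> P y -> x = y) ->
  \sum_k (if P k then F k else 0) = if [pick k | P k] is Some k then F k else 0.
Proof.
move=> Hu; case: pickP => [k Pk | none].
- rewrite (bigD1 k) //= Pk big1 ?addr0 // => x xk.
  case: ifP => // Px; have := Hu _ _ Px Pk; move/eqP: xk; by [].
- by rewrite big1 // => x _; rewrite none.
Qed.

Lemma C_last (L W : R) : 0 <= W -> (forall t, 0 < t -> t <= 1 -> L <= 4 * t * W) -> L <= 0.
Proof.
move=> W0 H; rewrite leNgt; apply/negP => L0.
have d0 : 0 < L + 8 * W by lra.
have t0 : 0 < L / (L + 8 * W) by apply: divr_gt0.
have t1 : L / (L + 8 * W) <= 1 by rewrite ler_pdivrMr //; lra.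
have := H _ t0 t1.
have e : L / (L + 8 * W) * (L + 8 * W) = L by rewrite divfK //; apply: lt0r_neq0.
set t := L / (L + 8 * W) in t0 t1 e *.
nra.
Qed.


Lemma stage2 {D1 D2 S : finType} (w : S -> R) (E2 : {set D2 * S})
  (xbar : D1 -> S -> R) (ybar : D2 -> S -> R) (M : {set D2 * S}) :
  (forall j, 0 <= w j) -> (forall j, 0 <= load xbar j <= 1) ->
  P2_optimal w E2 xbar ybar -> is_matching E2 M ->
  \sum_j w j * load xbar j +
  \sum_j (if j \in covered M then w j * (1 - load xbar j) else 0)
  <= ALG w xbar ybar.
Proof.
move=> w0 xl01 [_ P2opt] HM.
pose y' := fun i j => if (i, j) \in M then 1 - load xbar j else 0.
have colE : forall j, load y' j =
    if [pick i | (i, j) \in M] is Some i then 1 - load xbar j else 0.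
  move=> j; rewrite /load /y'.
  rewrite (@sum_uniq _ (fun i => (i, j) \in M) (fun _ => 1 - load xbar j)) //.
  by move=> x y hx hy; exact: (@match_uniq2 _ _ _ _ x y j HM hx hy).
have feas : frac_feasible E2 (fun j => 1 - load xbar j) y'.
  split.
  - move=> i j; rewrite /y'; case: ifP => // _.
    by have /andP[_ h] := xl01 j; rewrite subr_ge0.
  - move=> i j hE; rewrite /y'; case: ifP => // hM.
    by case/andP: HM => /fintype.subsetP /(_ _ hM) hE'; rewrite hE' in hE.
  - move=> i; rewrite /y'.
    rewrite (@sum_uniq _ (fun j => (i, j) \in M) (fun j => 1 - load xbar j)).
      case: pickP => // j _; have /andP[h _] := xl01 j; lra.
    by move=> x y hx hy; exact: (@match_uniq1 _ _ _ _ i x y HM hx hy).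
  - move=> j; rewrite -/(load y' j) colE; case: pickP => // _.
    by have /andP[_ h] := xl01 j; rewrite subr_ge0.
have := P2opt _ feas.
rewrite /ALG /P2_obj.
have -> : \sum_j w j * (load xbar j + load ybar j) =
   \sum_j w j * load xbar j + \sum_j w j * load ybar j.
  by rewrite -big_split /=; apply: eq_bigr => j _; rewrite mulrDr.
move=> h; apply: lerD => //; apply: le_trans h.
apply: ler_sum => j _; rewrite colE.
case: ifP => hj; last first.
  case: pickP => [i _|_]; last by rewrite mulr0.
  apply: mulr_ge0 => //; have /andP[_ h'] := xl01 j; lra.
case: pickP => [// | none].
by move: hj; rewrite inE => /existsP [i hi]; rewrite none in hi.
Qed.


Lemma perj (Rp : R) (b : bool) (w u e : R) :
  0 <= Rp <= 3/4 -> 0 <= w -> 0 <= u <= 1 -> 0 <= u + e <= 1 ->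
  w * (e * (1 - (if b then fLh Rp else fUh Rp) u)) - 4 * w * e ^+ 2 <=
  w * ((u + e) - \int[lebesgue_measure]_(t in `[0, u + e]) (if b then fL Rp else fU Rp) t)
  - w * (u - \int[lebesgue_measure]_(t in `[0, u]) (if b then fL Rp else fU Rp) t).
Proof.
move=> HR w0 hu hv.
have E : u + e - u = e by rewrite addrC addKr.
case: b.
- rewrite !int_fL //.
  have H := @Phi_gen R (fLh Rp) u (u + e) (@fLh_nd R Rp HR) (fun a b => @fLh_lip R Rp a b HR) hu hv.
  rewrite E in H; nra.
- rewrite !int_fU //.
  have H := @Phi_gen R (fUh Rp) u (u + e) (@fUh_nd R Rp HR) (fun a b => @fUh_lip R Rp a b HR) hu hv.
  rewrite E in H; nra.
Qed.

Lemma stage1 {D1 S : finType} (Rp : R) (w : S -> R) (E1 A : {set D1 * S})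
  (xbar : D1 -> S -> R) :
  0 <= Rp <= 3/4 -> (forall j, 0 <= w j) -> is_matching E1 A ->
  P1_optimal w (fun j => if j \in covered A then fL Rp else fU Rp) E1 xbar ->
  \sum_j (if j \in covered A then
             w j * (1 - (if j \in covered A then fLh Rp else fUh Rp) (load xbar j))
           else 0)
  <= \sum_j w j * (1 - (if j \in covered A then fLh Rp else fUh Rp) (load xbar j))
             * load xbar j.
Proof.
move=> HR w0 HA [[xb0 xbE xbrow xbcol] P1opt].
set fh := fun j => if j \in covered A then fLh Rp else fUh Rp.
have xl01 : forall j, 0 <= load xbar j <= 1.
  move=> j; apply/andP; split; last exact: xbcol.
  by apply: sumr_ge0 => i _.
pose a := fun i j => if (i, j) \in A then (1:R) else 0.
have alE : forall j, load a j = if j \in covered A then 1 else 0.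
  move=> j; rewrite /load /a.
  rewrite (@sum_uniq _ (fun i => (i, j) \in A) (fun _ => 1)); last first.
    by move=> x y hx hy; exact: (@match_uniq2 _ _ _ _ x y j HA hx hy).
  case: pickP => [i hi | none].
    by have -> : j \in covered A by rewrite inE; apply/existsP; exists i.
  case: ifP => // /[!inE] /existsP [i hi]; by rewrite none in hi.
have arow : forall i, \sum_j a i j <= 1.
  move=> i; rewrite /a.
  rewrite (@sum_uniq _ (fun j => (i, j) \in A) (fun _ => 1)); last first.
    by move=> x y hx hy; exact: (@match_uniq1 _ _ _ _ i x y HA hx hy).
  by case: pickP => [i' _|_]; lra.
have al01 : forall j, 0 <= load a j <= 1.
  by move=> j; rewrite alE; case: ifP => _; lra.
pose h := fun j => w j * (1 - fh j (load xbar j)).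
pose d := fun j => load a j - load xbar j.
have key : forall t, 0 < t -> t <= 1 -> \sum_j h j * d j <= 4 * t * \sum_j w j.
  move=> t t0 t1.
  pose xt := fun i j => xbar i j + t * (a i j - xbar i j).
  have ltE : forall j, load xt j = load xbar j + t * d j.
    move=> j; rewrite /load /xt big_split /= -mulr_sumr sumrB //.
  have rowE : forall i, \sum_j xt i j = \sum_j xbar i j + t * (\sum_j a i j - \sum_j xbar i j).
    move=> i; rewrite /xt big_split /= -mulr_sumr sumrB //.
  have feas : frac_feasible E1 (fun _ => 1) xt.
    split.
    - move=> i j; rewrite /xt; have := xb0 i j; have : 0 <= a i j by rewrite /a; case: ifP.
      nra.
    - move=> i j hE; rewrite /xt xbE // /a; case: ifP => hA; last by rewrite subrr mulr0 addr0.
      by case/andP: HA => /fintype.subsetP /(_ _ hA) hE'; rewrite hE' in hE.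
    - move=> i; rewrite rowE; have := xbrow i; have := arow i.
      have : 0 <= \sum_j xbar i j by apply: sumr_ge0.
      nra.
    - move=> j; rewrite -/(load xt j) ltE /d; have := xl01 j; have := al01 j.
      move=> /andP[? ?] /andP[? ?]; nra.
  have hP := P1opt _ feas.
  have H1 : \sum_j (w j * ((t * d j) * (1 - fh j (load xbar j))) - 4 * w j * (t * d j) ^+ 2)
      <= P1_obj w (fun j => if j \in covered A then fL Rp else fU Rp) xt
       - P1_obj w (fun j => if j \in covered A then fL Rp else fU Rp) xbar.
    rewrite /P1_obj -sumrB; apply: ler_sum => j _; rewrite ltE.
    apply: perj => //; rewrite -ltE; have /andP[_ h1] := xl01 j.
    rewrite ltE /d; have := xl01 j; have := al01 j.
    move=> /andP[? ?] /andP[? ?]; apply/andP; split; nra.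
  have H2 : t * \sum_j h j * d j - 4 * t ^+ 2 * \sum_j w j <=
      \sum_j (w j * ((t * d j) * (1 - fh j (load xbar j))) - 4 * w j * (t * d j) ^+ 2).
    rewrite !mulr_sumr -sumrB; apply: ler_sum => j _.
    have := w0 j; have := al01 j; have := xl01 j; rewrite /h /d.
    move=> /andP[? ?] /andP[? ?] ?.
    have hd : (load a j - load xbar j) ^+ 2 <= 1 by nra.
    have : 0 <= w j * t ^+ 2 * (1 - (load a j - load xbar j) ^+ 2).
      apply: mulr_ge0; [apply: mulr_ge0 => //; exact: sqr_ge0 | lra].
    nra.
  have : t * (\sum_j h j * d j - 4 * t * \sum_j w j) <= 0 by nra.
  rewrite pmulr_rle0 //; lra.
have W0 : 0 <= \sum_j w j by apply: sumr_ge0.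
have := C_last _ _ W0 key.
rewrite /d; under eq_bigr do rewrite mulrBr.
rewrite sumrB subr_le0 => H; apply: le_trans (le_trans _ H) _.
- apply: ler_sum => j _; rewrite alE /h; case: ifP => _; [by rewrite mulr1 | by rewrite mulr0].
- exact: lexx.
Qed.

End Comb.

Local Close Scope classical_set_scope.

Lemma fUh_ge0 {R : realType} (Rp x : R) : 0 <= Rp <= 3/4 -> x <= 1 -> 0 <= fUh Rp x.
Proof.
move=> /andP[R0 R1] x1; rewrite /fUh; case: ifP => hx; last lra.
apply: divr_ge0; lra.
Qed.

Theorem theorem2 (R : realType) (D1 D2 S : finType) (Rp : R)
  (w : S -> R) (E1 : {set D1 * S}) (E2 : {set D2 * S}) (A : {set D1 * S})
  (xbar : D1 -> S -> R) (ybar : D2 -> S -> R) :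
  0 <= Rp <= 3 / 4 ->
  (forall j, 0 <= w j) ->
  is_matching E1 A ->
  P1_optimal w (fun j => if j \in covered A then fL Rp else fU Rp) E1 xbar ->
  P2_optimal w E2 xbar ybar ->
  ALG w xbar ybar >= (2 * Num.sqrt (1 - Rp) - (1 - Rp)) * ADVICE w E2 A.
Proof.
move=> HR w0 HA HP1 HP2.
have HP1' := HP1; case: HP1' => [[xb0 _ _ xbcol] _].
have xl01 : forall j, 0 <= load xbar j <= 1.
  move=> j; apply/andP; split; last exact: xbcol.
  by apply: sumr_ge0 => i _.
have S1 := stage1 _ _ _ _ _ HR w0 HA HP1.
have ptL' := fun x => @ptL R Rp x HR.
have ptU' := fun x => @ptU R Rp x HR.
have [s0 [s2 [s12 s1]]] := @sqrt_facts R Rp HR.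
move: ptL' ptU' s0 s2 s12 s1.
set s := Num.sqrt (1 - Rp) => ptL' ptU' s0 s2 s12 s1.
set C := 2 * s - (1 - Rp).
have C0 : 0 < C by rewrite /C; nra.
have main : forall M, is_matching E2 M -> [disjoint covered M & covered A] ->
    C * (mweight w (covered A) + mweight w (covered M)) <= ALG w xbar ybar.
  move=> M HM Hd.
  have S2 := stage2 _ _ _ _ _ w0 xl01 HP2 HM.
  apply: le_trans S2.
  set fh := fun j => if j \in covered A then fLh Rp else fUh Rp.
  have sp : \sum_j w j * load xbar j =
      \sum_j w j * (1 - fh j (load xbar j)) * load xbar j +
      \sum_j w j * load xbar j * fh j (load xbar j).
    rewrite -big_split /=; apply: eq_bigr => j _; ring.
  have key : C * (mweight w (covered A) + mweight w (covered M)) <=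
      \sum_j (if j \in covered A then w j * (1 - fh j (load xbar j)) else 0)
      + \sum_j w j * load xbar j * fh j (load xbar j)
      + \sum_j (if j \in covered M then w j * (1 - load xbar j) else 0).
    rewrite /mweight big_mkcond [X in _ + X]big_mkcond -big_split /= mulr_sumr -!big_split /=.
    apply: ler_sum => j _.
    have wj := w0 j; have /andP[x0 x1] := xl01 j.
    rewrite /fh; case hA: (j \in covered A).
    - have hM : (j \in covered M) = false by apply: (disjointFl Hd hA).
      rewrite hM; have HH := ptL' _ (xl01 j).
      have := ler_wpM2l wj HH; rewrite -/C => HH2.
      have e : w j * (1 - fLh Rp (load xbar j) + load xbar j * fLh Rp (load xbar j)) =
        w j * (1 - fLh Rp (load xbar j)) + w j * load xbar j * fLh Rp (load xbar j) by ring.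
      rewrite e in HH2; rewrite addr0 addr0 mulrC; exact: HH2.
    - case hM: (j \in covered M).
      + have HH := ptU' _ (xl01 j).
        have := ler_wpM2l wj HH; rewrite -/C => HH2.
        have e : w j * (load xbar j * fUh Rp (load xbar j) + (1 - load xbar j)) =
          w j * load xbar j * fUh Rp (load xbar j) + w j * (1 - load xbar j) by ring.
        rewrite e in HH2; rewrite add0r add0r mulrC; exact: HH2.
      + have := @fUh_ge0 R Rp (load xbar j) HR x1.
        rewrite !add0r addr0 mulr0 => hf.
        by apply: mulr_ge0 => //; apply: mulr_ge0.
  move: S1; rewrite -/fh => S1.
  lra.
have m0 : C * mweight w (covered A) <= ALG w xbar ybar.
  have hm : is_matching E2 (finset.set0 : {set D2 * S}).
    apply/andP; split; first exact: finset.sub0set.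
    by apply/forallP => e; rewrite finset.in_set0.
  have hd : [disjoint covered (finset.set0 : {set D2 * S}) & covered A].
    apply: eq_disjoint0 => j; rewrite !inE; apply/existsP => -[i]; by rewrite finset.in_set0.
  have := main _ hm hd.
  have : 0 <= C * mweight w (covered (finset.set0 : {set D2 * S})).
    by apply: mulr_ge0; [lra | apply: sumr_ge0].
  rewrite mulrDr; lra.
rewrite /ADVICE mulrDr.
have bm : \big[Num.max/0]_(M : {set D2 * S} |
                     is_matching E2 M && [disjoint covered M & covered A])
     mweight w (covered M) <= (ALG w xbar ybar - C * mweight w (covered A)) / C.
  apply: bigmax_le.
    by apply: divr_ge0; lra.
  move=> M /andP[HM Hd]; rewrite ler_pdivlMr //.
  have := main M HM Hd; rewrite mulrDr; lra.
move: bm; rewrite ler_pdivlMr // => bm.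
lra.
Qed.
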